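(* Let $0<d\le n$ be integers with $n$ and $d$ even. Then \[ A_2(n/2,\,d/2)\;\le\; M_1(n,d;1)\;\le\; A_4(n,d). \]
   Context: Sequences are words over the DNA alphabet $\{\mathtt A,\mathtt T,\mathtt C,\mathtt G\}$. Hamming distance between two words of equal length is the number of positions where they differ. For $D>0$, a word is called $D$-GC-prefix-balanced ($D$-GCPB) if for every prefix of it (including the whole word), the absolute difference between the number of symbols from $\{\mathtt G,\mathtt C\}$ and the number of symbols from $\{\mathtt A,\mathtt T\}$ in that prefix is at most $D$; a set of words is $D$-GCPB if all its words are. For $0<d\le n$ and $D>0$, $M_1(n,d;D)$ denotes the maximum size of a $D$-GCPB set of words of length $n$ over $\{\mathtt A,\mathtt T,\mathtt C,\mathtt G\}$ with minimum pairwise Hamming distance at least $d$. For an integer $q>1$, $A_q(n,d)$ denotes the maximum size of a code of length $n$ over a $q$-ary alphabet with minimum Hamming distance $d$. *)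

(* Defs.v *)
From HB Require Import structures.
From mathcomp Require Import all_boot all_order all_algebra.
Set Implicit Arguments. Unset Strict Implicit. Unset Printing Implicit Defensive.
Import Order.TTheory GRing.Theory Num.Theory.

Inductive nucl := nA | nT | nC | nG.

Definition nucl_to_ord (x : nucl) : 'I_4 :=
  match x with nA => @inord 3 0 | nT => @inord 3 1 | nC => @inord 3 2 | nG => @inord 3 3 end.
Definition ord_to_nucl (i : 'I_4) : nucl :=
  match val i with 0 => nA | 1 => nT | 2 => nC | _ => nG end.
Lemma nuclK : cancel nucl_to_ord ord_to_nucl.
Proof. by case; rewrite /ord_to_nucl /= inordK. Qed.
HB.instance Definition _ := Finite.copy nucl (can_type nuclK).

Definition is_GC (x : nucl) : bool := (x == nC) || (x == nG).

Definition word (T : Type) (n : nat) := {ffun 'I_n -> T}.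

Definition hamming (T : eqType) (n : nat) (u v : {ffun 'I_n -> T}) : nat :=
  #|[set i : 'I_n | u i != v i]|.

Definition min_dist_ge (T : finType) (n d : nat) (C : {set {ffun 'I_n -> T}}) : bool :=
  [forall u in C, forall v in C, (u != v) ==> (d <= hamming u v)].

Definition GCPB (D : nat) (n : nat) (w : {ffun 'I_n -> nucl}) : bool :=
  [forall k : 'I_n.+1,
    let gc := #|[set i : 'I_n | (i < k) && is_GC (w i)]| in
    let ta := #|[set i : 'I_n | (i < k) && ~~ is_GC (w i)]| in
    (`|(gc%:Z - ta%:Z)%R| <= D)%N].

Definition GCPB_set (D n : nat) (C : {set {ffun 'I_n -> nucl}}) : bool :=
  [forall w in C, GCPB D w].

Definition M1 (n d D : nat) : nat :=
  \max_(C : {set {ffun 'I_n -> nucl}} | GCPB_set D C && min_dist_ge d C) #|C|.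

Definition A_q (q n d : nat) : nat :=
  \max_(C : {set {ffun 'I_n -> 'I_q}} | min_dist_ge d C) #|C|.

(* Main.v *)
Require Import Defs.
From mathcomp Require Import all_boot all_order all_algebra.
From mathcomp Require Import zify.
Set Implicit Arguments. Unset Strict Implicit. Unset Printing Implicit Defensive.

Lemma card_nat (n : nat) (P : pred nat) :
  #|[set i : 'I_n | P (val i)]| = \sum_(0 <= i < n) P i.
Proof.
rewrite -sum1_card big_mkcond /= big_mkord; apply: eq_bigr => i _.
by rewrite inE; case: (P i).
Qed.

Lemma sum_half (m : nat) (F : nat -> nat) :
  \sum_(0 <= i < m.*2) F (i./2) = (\sum_(0 <= j < m) F j).*2.
Proof.
elim: m => [|m IH]; first by rewrite !big_geq.
rewrite doubleS !big_nat_recr //= IH doubleD.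
rewrite doubleK uphalf_double.
by rewrite -addnA addnn.
Qed.

Lemma sum_prefix (n k : nat) (P : pred nat) : k <= n ->
  \sum_(0 <= i < n) ((i < k) && P i) = \sum_(0 <= i < k) P i.
Proof.
move=> kn; rewrite (@big_cat_nat _ _ _ k 0 n _ _ (leq0n k) kn) /=.
have -> : \sum_(k <= i < n) ((i < k) && P i) = 0.
  rewrite big_nat_cond big1 // => i /andP[] /andP[] ki _ _.
  by rewrite ltnNge ki.
rewrite addn0; apply: eq_big_nat => i /andP[_ ->] //.
Qed.

Definition bit m (u : {ffun 'I_m -> 'I_2}) (j : nat) : bool :=
  if insub j is Some o then (val (u o) == 1) else false.

Lemma bitE m (u : {ffun 'I_m -> 'I_2}) (o : 'I_m) : bit u (val o) = (val (u o) == 1).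
Proof. by rewrite /bit valK. Qed.

Lemma neq_I2 (x y : 'I_2) : (x != y) = ((val x == 1) != (val y == 1)).
Proof.
case: x => [[|[|x]] Hx] //; case: y => [[|[|y]] Hy] //.
Qed.

Definition Qb m (u : {ffun 'I_m -> 'I_2}) (i : nat) : bool := bit u (i./2) != odd i.

Definition enc m (u : {ffun 'I_m -> 'I_2}) : {ffun 'I_(m.*2) -> nucl} :=
  [ffun i : 'I_(m.*2) => if Qb u i then nC else nA].

Lemma hamming_bit m (u v : {ffun 'I_m -> 'I_2}) :
  hamming u v = \sum_(0 <= j < m) (bit u j != bit v j).
Proof.
rewrite /hamming -card_nat; apply: eq_card => j; rewrite !inE !bitE.
by rewrite neq_I2.
Qed.

Lemma hamming_enc m (u v : {ffun 'I_m -> 'I_2}) :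
  hamming (enc u) (enc v) = (hamming u v).*2.
Proof.
rewrite hamming_bit -(@sum_half m (fun j => nat_of_bool (bit u j != bit v j))).
rewrite /hamming -(@card_nat _ (fun i => bit u i./2 != bit v i./2)).
apply: eq_card => i; rewrite !inE !ffunE /Qb.
case: (bit u _); case: (bit v _); case: (odd i) => /=. all: first [by rewrite eqxx | by apply/eqP].
Qed.

Lemma Qb_pairs m (u : {ffun 'I_m -> 'I_2}) t :
  \sum_(0 <= i < t.*2) Qb u i = t /\ \sum_(0 <= i < t.*2) ~~ Qb u i = t.
Proof.
elim: t => [|t [IH1 IH2]]; first by rewrite !big_geq.
rewrite doubleS !big_nat_recr //= IH1 IH2 /Qb.
rewrite ?doubleK ?uphalf_double /= ?odd_double /=.
rewrite uphalf_double; case: (bit u t) => /=; split; rewrite /= ?addn0 ?addn1 ?add0n ?addnS ?addn0 //. all: idtac.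
Qed.

Lemma GC_nC : is_GC nC. Proof. by rewrite /is_GC eqxx. Qed.
Lemma GC_nA : is_GC nA = false.
Proof. by apply/negbTE; rewrite /is_GC negb_or; apply/andP; split; apply/eqP. Qed.

Lemma enc_GCPB m (u : {ffun 'I_m -> 'I_2}) : GCPB 1 (enc u).
Proof.
apply/forallP => k /=.
have Hk : k <= m.*2 by rewrite -ltnS.
rewrite (_ : [set i : 'I_(m.*2) | (i < k) && is_GC (enc u i)] =
   [set i : 'I_(m.*2) | (fun x => (x < k) && Qb u x) (val i)]); last first.
  by apply/setP => i; rewrite !inE ffunE; case: (Qb u i); rewrite ?GC_nC ?GC_nA.
rewrite (_ : [set i : 'I_(m.*2) | (i < k) && ~~ is_GC (enc u i)] =
   [set i : 'I_(m.*2) | (fun x => (x < k) && ~~ Qb u x) (val i)]); last first.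
  by apply/setP => i; rewrite !inE ffunE; case: (Qb u i); rewrite ?GC_nC ?GC_nA.
rewrite (@card_nat _ (fun x => (x < k) && Qb u x)) (@card_nat _ (fun x => (x < k) && ~~ Qb u x)) !sum_prefix //.
rewrite -(odd_double_half k).
case: (Qb_pairs u k./2) => H1 H2.
case: (odd k) => /=.
- rewrite add1n !big_nat_recr //= H1 H2 distnDl.
  by case: (Qb u _).
- by rewrite !add0n H1 H2 distnn.
Qed.

Lemma hamming0 (T : finType) n (u v : {ffun 'I_n -> T}) : hamming u v = 0 -> u = v.
Proof.
move/eqP; rewrite /hamming cards_eq0 => /eqP H; apply/ffunP => i.
apply/eqP; apply/negPn; apply/negP => Hi.
have : i \in [set i0 | u i0 != v i0] by rewrite inE.
by rewrite H inE.
Qed.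

Lemma upper n d : M1 n d 1 <= A_q 4 n d.
Proof.
apply/bigmax_leqP => C /andP[_ HC].
pose g (w : {ffun 'I_n -> nucl}) : {ffun 'I_n -> 'I_4} := [ffun i => nucl_to_ord (w i)].
have ginj : injective g.
  move=> u v /ffunP H; apply/ffunP => i; have := H i; rewrite !ffunE.
  exact: (can_inj nuclK).
have gham : forall u v, hamming (g u) (g v) = hamming u v.
  by move=> u v; apply: eq_card => i; rewrite !inE !ffunE (inj_eq (can_inj nuclK)).
rewrite -(card_imset C ginj); apply: leq_bigmax_cond.
apply/forallP => x; apply/implyP => /imsetP [u uC ->].
apply/forallP => y; apply/implyP => /imsetP [v vC ->]; apply/implyP => neq.
rewrite gham; have := forallP HC u; rewrite uC /= => /forallP/(_ v).
rewrite vC /= => /implyP; apply.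
by apply/eqP => E; rewrite E eqxx in neq.
Qed.

Lemma lower m e : A_q 2 m e <= M1 m.*2 e.*2 1.
Proof.
apply/bigmax_leqP => C HC.
have einj : injective (@enc m).
  move=> u v E; apply: hamming0.
  have := hamming_enc u v; rewrite E.
  have -> : hamming (enc v) (enc v) = 0.
    by apply/eqP; rewrite cards_eq0; apply/eqP/setP => i; rewrite !inE eqxx.
  by move/esym/eqP; rewrite double_eq0 => /eqP.
rewrite -(card_imset C einj); apply: leq_bigmax_cond; apply/andP; split.
  by apply/forallP => x; apply/implyP => /imsetP [u uC ->]; apply: enc_GCPB.
apply/forallP => x; apply/implyP => /imsetP [u uC ->].
apply/forallP => y; apply/implyP => /imsetP [v vC ->]; apply/implyP => neq.
rewrite hamming_enc leq_double; have := forallP HC u; rewrite uC /= => /forallP/(_ v).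
rewrite vC /= => /implyP; apply.
by apply/eqP => E; rewrite E eqxx in neq.
Qed.

Theorem theorem2 (n d : nat) :
  0 < d <= n -> ~~ odd n -> ~~ odd d ->
  A_q 2 n./2 d./2 <= M1 n d 1 <= A_q 4 n d.
Proof.
move=> _ on od; rewrite upper andbT.
rewrite -{2}(even_halfK on) -{2}(even_halfK od).
exact: lower.
Qed.
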